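(* For every $n>3$, the only graph with $n$ vertices that is minor minimal with respect to spherical dimension $n-1$ is $K_{n-3}+\epsilon_3$; that is, $\mathbb{S}_n=\{K_{n-3}+\epsilon_3\}$.
   Context: All graphs are finite and simple; $\epsilon_3$ is the graph with three vertices and no edges, and $G+H$ is obtained from disjoint copies of $G$ and $H$ by adding all edges between them. A minor of $G$ is a graph obtained by a sequence of vertex deletions, edge deletions and edge contractions (discarding loops and multiple edges). A unit-distance embedding of $G$ in $\mathbb{R}^n$ is an injective map $f$ from the vertex set to $\mathbb{R}^n$ with $|f(u)-f(v)|=1$ for every edge $uv$ and no $f(w)$ on the segment $[f(u),f(v)]$ for an edge $uv$ with $w\notin\{u,v\}$. $G$ admits a spherical embedding of dimension $k$ and radius $r$ if $G$ has a unit-distance embedding in $\mathbb{R}^k$ all of whose vertices lie on a sphere $\{x\in\mathbb{R}^k:|x-c|=r\}$. $\operatorname{sdim}G$ is the least $k$ such that $G$ admits a spherical embedding of dimension $k$ and some radius $r<1$. $G$ is minor minimal with respect to spherical dimension $d$ if $\operatorname{sdim}G=d$ and every proper minor of $G$ has spherical dimension less than $d$. $\mathbb{S}_n$ denotes the set of $n$-vertex graphs that are minor minimal with respect to spherical dimension $n-1$. *)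

(* Defs.v *)
From HB Require Import structures.
From mathcomp Require Import all_boot all_order all_algebra.
From mathcomp Require Import Rstruct.
Set Implicit Arguments. Unset Strict Implicit. Unset Printing Implicit Defensive.
Import Order.TTheory GRing.Theory Num.Theory.
Local Open Scope ring_scope.

Notation RR := Rdefinitions.R.

Definition simple_graph (T : finType) (e : rel T) : Prop :=
  symmetric e /\ irreflexive e.

Definition graph_iso (T' T : finType) (e' : rel T') (e : rel T) : Prop :=
  exists f : T' -> T, bijective f /\ forall x y, e' x y = e (f x) (f y).

Definition connected_set (T : finType) (e : rel T) (S : {set T}) : Prop :=
  forall a b, a \in S -> b \in S ->
    connect (fun x y => [&& e x y, x \in S & y \in S]) a b.

Definition is_minor (T' T : finType) (e' : rel T') (e : rel T) : Prop :=
  exists phi : T' -> {set T},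
    [/\ forall x, phi x != set0,
        forall x y, x != y -> [disjoint phi x & phi y],
        forall x, connected_set e (phi x) &
        forall x y, e' x y -> exists a b, [/\ a \in phi x, b \in phi y & e a b]].

Definition is_proper_minor (T' T : finType) (e' : rel T') (e : rel T) : Prop :=
  is_minor e' e /\ ~ graph_iso e' e.

Definition enorm (k : nat) (v : 'rV[RR]_k) : RR :=
  Num.sqrt (\sum_(i < k) (v ord0 i) ^+ 2).

Definition unit_distance_embedding (T : finType) (e : rel T) (k : nat)
    (f : T -> 'rV[RR]_k) : Prop :=
  [/\ injective f,
      forall u v, e u v -> enorm (f u - f v) = 1 &
      forall u v w, e u v -> w != u -> w != v ->
        ~ (exists t : RR, [/\ 0 <= t, t <= 1 &
              f w = (1 - t) *: f u + t *: f v])].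

Definition spherical_embedding (T : finType) (e : rel T) (k : nat) (r : RR) : Prop :=
  exists f : T -> 'rV[RR]_k, unit_distance_embedding e f /\
    exists c : 'rV[RR]_k, forall x, enorm (f x - c) = r.

Definition sph_embeddable (T : finType) (e : rel T) (k : nat) : Prop :=
  exists r : RR, r < 1 /\ spherical_embedding e k r.

Definition sdim_eq (T : finType) (e : rel T) (d : nat) : Prop :=
  sph_embeddable e d /\ forall k, (k < d)%N -> ~ sph_embeddable e k.

Definition sdim_lt (T : finType) (e : rel T) (d : nat) : Prop :=
  exists k, (k < d)%N /\ sph_embeddable e k.

Definition minor_minimal_sdim (T : finType) (e : rel T) (d : nat) : Prop :=
  sdim_eq e d /\
  forall (T' : finType) (e' : rel T'), simple_graph e' ->
    is_proper_minor e' e -> sdim_lt e' d.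

Definition in_S (n : nat) (T : finType) (e : rel T) : Prop :=
  #|T| = n /\ minor_minimal_sdim e n.-1.

Definition K_plus_eps3_rel (m : nat) : rel ('I_m + 'I_3)%type :=
  fun x y => match x, y with
             | inl i, inl j => i != j
             | inl _, inr _ => true
             | inr _, inl _ => true
             | inr _, inr _ => false
             end.
Arguments K_plus_eps3_rel m : clear implicits.

(* Main.v *)
Require Import Defs.
From HB Require Import structures.
From mathcomp Require Import all_boot all_order all_algebra Rstruct.
From mathcomp Require Import lra ring zify.
From Stdlib Require Import Classical.
Set Implicit Arguments. Unset Strict Implicit. Unset Printing Implicit Defensive.
Import Order.TTheory GRing.Theory Num.Theory.
Local Open Scope ring_scope.

Definition dot (k : nat) (u v : 'rV[RR]_k) : RR := \sum_(i < k) u ord0 i * v ord0 i.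
Definition sq (k : nat) (u : 'rV[RR]_k) : RR := \sum_(i < k) (u ord0 i) ^+ 2.

Lemma sqE k (u : 'rV[RR]_k) : sq u = dot u u.
Proof. by apply: eq_bigr => i _; rewrite expr2. Qed.

Lemma dotC k (u v : 'rV[RR]_k) : dot u v = dot v u.
Proof. by apply: eq_bigr => i _; rewrite mulrC. Qed.

Lemma dotDl k (u v w : 'rV[RR]_k) : dot (u + v) w = dot u w + dot v w.
Proof. rewrite /dot -big_split /=; apply: eq_bigr => i _; by rewrite mxE mulrDl. Qed.

Lemma dotNl k (u w : 'rV[RR]_k) : dot (- u) w = - dot u w.
Proof. rewrite /dot -sumrN; apply: eq_bigr => i _; by rewrite mxE mulNr. Qed.

Lemma dotBl k (u v w : 'rV[RR]_k) : dot (u - v) w = dot u w - dot v w.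
Proof. by rewrite dotDl dotNl. Qed.

Lemma dotZl k a (u w : 'rV[RR]_k) : dot (a *: u) w = a * dot u w.
Proof. rewrite /dot mulr_sumr; apply: eq_bigr => i _; by rewrite mxE mulrA. Qed.

Lemma dotDr k (u v w : 'rV[RR]_k) : dot w (u + v) = dot w u + dot w v.
Proof. by rewrite dotC dotDl !(dotC w). Qed.
Lemma dotBr k (u v w : 'rV[RR]_k) : dot w (u - v) = dot w u - dot w v.
Proof. by rewrite dotC dotBl !(dotC w). Qed.
Lemma dotZr k a (u w : 'rV[RR]_k) : dot w (a *: u) = a * dot w u.
Proof. by rewrite dotC dotZl dotC. Qed.

Lemma sq_ge0 k (u : 'rV[RR]_k) : 0 <= sq u.
Proof. by apply: sumr_ge0 => i _; rewrite sqr_ge0. Qed.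

Lemma sq_eq0 k (u : 'rV[RR]_k) : sq u = 0 -> u = 0.
Proof.
move=> h; apply/rowP => i; rewrite mxE.
have H := psumr_eq0P (fun j _ => sqr_ge0 (u ord0 j)) h.
have := H i isT; rewrite [X in u X]ord1.
by move/eqP; rewrite sqrf_eq0 => /eqP.
Qed.

Lemma enorm_sq k (u : 'rV[RR]_k) x : enorm u = x -> sq u = x ^+ 2 /\ 0 <= x.
Proof. move=> <-; split; [by rewrite sqr_sqrtr // sq_ge0 | exact: sqrtr_ge0]. Qed.

Lemma sq_enorm k (u : 'rV[RR]_k) x : 0 <= x -> sq u = x ^+ 2 -> enorm u = x.
Proof. move=> hx h; rewrite /enorm -/(sq u) h sqrtr_sqr ger0_norm //. Qed.

Definition emb (T : finType) (e : rel T) (k : nat) (r : RR) : Prop :=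
  exists (f : T -> 'rV[RR]_k) (c : 'rV[RR]_k),
    [/\ injective f, forall u v, e u v -> sq (f u - f v) = 1 &
        forall x, sq (f x - c) = r ^+ 2].

Lemma sphere_line k (P Q : 'rV[RR]_k) r2 t :
  sq P = r2 -> sq Q = r2 -> sq ((1 - t) *: P + t *: Q) = r2 ->
  t = 0 \/ t = 1 \/ P = Q.
Proof.
rewrite !sqE => hP hQ.
rewrite !(dotDl, dotDr, dotZl, dotZr) hP hQ (dotC Q P) => h.
have h2 : t * (1 - t) * dot (P - Q) (P - Q) = 0.
  rewrite !(dotBl, dotBr) hP hQ (dotC Q P). 
  have h' := congr1 (fun x => x - r2) h; rewrite /= subrr in h'.
  rewrite -[RHS]oppr0 -h'; ring.
move/eqP: h2; rewrite !mulf_eq0 => /orP [/orP [/eqP ->|]|]; first by left.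
  by rewrite subr_eq0 => /eqP <-; right; left.
by rewrite -sqE => /eqP/sq_eq0/eqP; rewrite subr_eq0 => /eqP ->; right; right.
Qed.

Lemma emb_sph (T : finType) (e : rel T) k r : emb e k r -> r < 1 -> 0 <= r ->
  sph_embeddable e k.
Proof.
move=> [f [c [finj fe fs]]] r1 r0; exists r; split => //.
exists f; split; last by exists c => x; apply: sq_enorm => //; exact: fs.
split => //.
  move=> u v /fe h; apply: sq_enorm => //; by rewrite h expr1n.
move=> u v w _ wu wv [t [t0 t1 hw]].
have := @sphere_line k (f u - c) (f v - c) (r ^+ 2) t (fs u) (fs v).
have -> : (1 - t) *: (f u - c) + t *: (f v - c) = f w - c.
  by rewrite hw !scalerBr addrACA -opprD -scalerDl subrK scale1r.
move=> /(_ (fs w)) [t0'|[t1'|]].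
- by move/eqP: wu; apply; apply: finj; rewrite hw t0' subr0 scale1r scale0r addr0.
- by move/eqP: wv; apply; apply: finj; rewrite hw t1' subrr scale0r scale1r add0r.
- move/(congr1 (fun x => x + c)); rewrite /= !subrK => huv.
  by move/eqP: wv; apply; apply: finj; rewrite hw huv -scalerDl subrK scale1r.
Qed.

Lemma sph_emb (T : finType) (e : rel T) k : sph_embeddable e k -> exists r, emb e k r.
Proof.
move=> [r [_ [f [[finj fe _] [c fc]]]]]; exists r, f, c; split => //.
  by move=> u v /fe /enorm_sq [-> _]; rewrite expr1n.
by move=> x; case: (enorm_sq (fc x)).
Qed.

Lemma emb_sub (T T2 : finType) (e : rel T) (E : rel T2) k r (g : T -> T2) :
  emb E k r -> injective g -> (forall x y, e x y -> E (g x) (g y)) -> emb e k r.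
Proof.
move=> [f [c [finj fe fs]]] ginj ge; exists (f \o g), c; split => //.
- by move=> x y /= /finj /ginj.
- by move=> u v /ge /fe.
- by move=> x; apply: fs.
Qed.

Definition pad k (u : 'rV[RR]_k) : 'rV[RR]_(1 + k) := @row_mx RR 1 1 k 0 u.

Lemma sq_row_mx j k (a : 'rV[RR]_j) (b : 'rV[RR]_k) : sq (row_mx a b) = sq a + sq b.
Proof.
rewrite /sq big_split_ord /=; congr (_ + _); apply: eq_bigr => i _;
  by rewrite ?row_mxEl ?row_mxEr.
Qed.

Lemma sq0 k : sq (0 : 'rV[RR]_k) = 0.
Proof. by rewrite /sq big1 // => i _; rewrite mxE expr0n. Qed.


Lemma row_mx_sub j k (a c : 'rV[RR]_j) (b d : 'rV[RR]_k) :
  row_mx a b - row_mx c d = row_mx (a - c) (b - d).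
Proof. by rewrite opp_row_mx add_row_mx. Qed.

Lemma sq_pad_sub k (a b : 'rV[RR]_k) : sq (pad a - pad b) = sq (a - b).
Proof. by rewrite /pad row_mx_sub sq_row_mx subr0 sq0 add0r. Qed.

Lemma emb_up (T : finType) (e : rel T) k r : emb e k r -> emb e k.+1 r.
Proof.
move=> [f [c [finj fe fs]]]; exists (fun x => pad (f x)), (pad c); split.
- by move=> x y; rewrite /pad => /(congr1 (@rsubmx _ 1 1 k)); rewrite !row_mxKr => /finj.
- by move=> u v /fe h; rewrite -h; exact: sq_pad_sub.
- by move=> x; rewrite -(fs x); exact: sq_pad_sub.
Qed.

Lemma emb_upn (T : finType) (e : rel T) k k' r : (k <= k')%N -> emb e k r -> emb e k' r.
Proof.
move=> /subnK <-; elim: (k' - k)%N => // d IH h; rewrite addSn; exact: emb_up (IH h).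
Qed.

Definition cone_rel (T : finType) (e : rel T) : rel (option T) :=
  fun x y => match x, y with
             | Some a, Some b => e a b
             | None, None => false
             | _, _ => true end.

Definition join (m : nat) (B : finType) (eB : rel B) : rel ('I_m + B)%type :=
  fun x y => match x, y with
             | inl i, inl j => i != j
             | inr a, inr b => eB a b
             | _, _ => true end.
Arguments join m {B} eB.

Lemma sq_const (a : RR) : sq (const_mx a : 'rV[RR]_1) = a ^+ 2.
Proof. by rewrite /sq big_ord1 mxE. Qed.

Lemma sqN k (u : 'rV[RR]_k) : sq (- u) = sq u.
Proof. by rewrite !sqE dotNl dotC dotNl opprK. Qed.

Lemma emb_cone (T : finType) (e : rel T) k r : emb e k r -> 0 <= r -> r ^+ 2 <= 1/2 ->
  exists r', [/\ 0 <= r', r' ^+ 2 <= 1/2 & emb (cone_rel e) (1 + k) r'].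
Proof.
move=> [f [c [finj fe fs]]] r0 r2.
set h := Num.sqrt (1 - r ^+ 2).
have hh : h ^+ 2 = 1 - r ^+ 2 by rewrite sqr_sqrtr // subr_ge0; lra.
have h0 : 0 < h by rewrite sqrtr_gt0 subr_gt0; lra.
set r' := (2 * h)^-1.
have hr : 2 * h * r' = 1 by rewrite mulfV //; apply/eqP => /eqP; rewrite mulf_eq0; lra.
have r'0 : 0 < r' by rewrite invr_gt0; lra.
set g := h - r'.
exists r'; split; first lra.
  nra.
pose F (o : option T) : 'rV[RR]_(1 + k) :=
  match o with Some x => @row_mx RR 1 1 k 0 (f x) | None => row_mx (const_mx h) c end.
exists F, (@row_mx RR 1 1 k (const_mx g) c); split.
- move=> [x|] [y|] //= hxy.
  + by have := congr1 (@rsubmx RR 1 1 k) hxy; rewrite !row_mxKr => /finj ->.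
  + have := congr1 (fun v : 'rV[RR]_(1 + k) => v ord0 (lshift k ord0)) hxy => /=; rewrite !row_mxEl !mxE.
    by move=> /esym/eqP; rewrite (gt_eqF h0).
  + have := congr1 (fun v : 'rV[RR]_(1 + k) => v ord0 (lshift k ord0)) hxy => /=; rewrite !row_mxEl !mxE.
    by move=> /eqP; rewrite (gt_eqF h0).
- move=> [x|] [y|] //= hxy.
  + by rewrite row_mx_sub sq_row_mx subr0 sq0 add0r; exact: fe.
  + by rewrite row_mx_sub sq_row_mx sub0r sqN sq_const fs; lra.
  + by rewrite row_mx_sub sq_row_mx subr0 sq_const -opprB sqN fs; lra.
- move=> [x|] /=.
  + rewrite row_mx_sub sq_row_mx sub0r sqN sq_const fs. 
    rewrite /g; nra.
  + rewrite row_mx_sub sq_row_mx subrr sq0 addr0.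
    have -> : const_mx h - const_mx g = const_mx r' :> 'rV[RR]_1.
      by apply/rowP => i; rewrite !mxE /g; ring.
    by rewrite sq_const.
Qed.

Definition of0 (B : Type) (i : 'I_0) : B. Proof. by case: i. Defined.

Lemma emb_join (B : finType) (eB : rel B) k r : emb eB k r -> 0 <= r -> r ^+ 2 <= 1/2 ->
  forall m, exists r', [/\ 0 <= r', r' ^+ 2 <= 1/2 & emb (join m eB) (m + k) r'].
Proof.
move=> he r0 r2; elim=> [|m [r1 [r10 r12 IH]]].
  exists r; split => //.
  pose g (x : ('I_0 + B)%type) : B := match x with inl i => of0 B i | inr b => b end.
  apply: (emb_sub (g := g) he).
    by move=> [[]//|a] [[]//|b] /= ->.
  by move=> [[]//|a] [[]//|b].
have [r3 [r30 r32 hc]] := emb_cone IH r10 r12.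
exists r3; split => //.
pose g (x : ('I_m.+1 + B)%type) : option ('I_m + B)%type :=
  match x with inl i => omap inl (unlift ord0 i) | inr b => Some (inr b) end.
apply: (emb_sub (g := g) hc).
  move=> [i|a] [j|b] //=.
  - case: unliftP => [i' ->|->]; case: unliftP => [j' ->|->] //=.
    by move=> [->].
  - by case: unliftP.
  - by case: unliftP.
  - by move=> [->].
move=> [i|a] [j|b] //=; try by case: unliftP.
case: unliftP => [i' ->|->]; case: unliftP => [j' ->|->] //=; try by rewrite eqxx.
Qed.

Lemma emb_K1 : emb (fun _ _ : 'I_1 => false) 0 0.
Proof.
exists (fun _ => 0), 0; split => //.
- by move=> x y _; rewrite (ord1 x) (ord1 y).
- by move=> x; rewrite /sq big_ord0 expr0n.
Qed.

Definition pt (x y : RR) : 'rV[RR]_2 := \row_(i < 2) [:: x; y]`_i.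

Lemma sq_pt x y : sq (pt x y) = x ^+ 2 + y ^+ 2.
Proof. by rewrite /sq !big_ord_recr big_ord0 /= !mxE /= add0r. Qed.

Lemma pt_sub x y x' y' : pt x y - pt x' y' = pt (x - x') (y - y').
Proof. by apply/rowP => i; rewrite !mxE; case: i => [[|[|?]] ?]. Qed.

Lemma pt_inj x y x' y' : pt x y = pt x' y' -> x = x' /\ y = y'.
Proof.
move=> h; have h0 := congr1 (fun v : 'rV[RR]_2 => v ord0 ord0) h.
have h1 := congr1 (fun v : 'rV[RR]_2 => v ord0 (lift ord0 ord0)) h.
by move: h0 h1; rewrite /= !mxE.
Qed.

Definition c4 : rel 'I_4 := fun i j => ((i : nat) < 2)%N != ((j : nat) < 2)%N.
Definition tri : rel 'I_4 := fun i j => [&& i != j, (i : nat) != 0%N & (j : nat) != 0%N].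

Lemma emb_c4 : exists r, [/\ 0 <= r, r ^+ 2 <= 1/2 & emb c4 2 r].
Proof.
set t := Num.sqrt (1 / 2 : RR).
have tt : t ^+ 2 = 1/2 by rewrite sqr_sqrtr //; lra.
have t0 : 0 < t by rewrite sqrtr_gt0; lra.
exists t; split; [lra|lra|].
pose f (i : 'I_4) := match val i with 0 => pt t 0 | 1 => pt (- t) 0 | 2 => pt 0 t | _ => pt 0 (- t) end.
exists f, 0; split.
- move=> i j h; apply: val_inj; move: h.
  case: i => [[|[|[|[|i]]]] hi] //; case: j => [[|[|[|[|j]]]] hj] //=;
    move=> /pt_inj [] ? ?; first [reflexivity | exfalso; lra].
- case=> [[|[|[|[|i]]]] hi] //; case=> [[|[|[|[|j]]]] hj] //= _;
    rewrite /f /= pt_sub sq_pt; nra.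
- case=> [[|[|[|[|i]]]] hi] //; rewrite /f /= subr0 sq_pt; nra.
Qed.

Lemma emb_tri : exists r, [/\ 0 <= r, r ^+ 2 <= 1/2 & emb tri 2 r].
Proof.
set t := Num.sqrt (1 / 3 : RR).
have tt : t ^+ 2 = 1/3 by rewrite sqr_sqrtr //; lra.
have t0 : 0 < t by rewrite sqrtr_gt0; lra.
exists t; split; [lra|lra|].
pose f (i : 'I_4) := match val i with 0 => pt (- t) 0 | 1 => pt t 0
   | 2 => pt (- t / 2) (1/2) | _ => pt (- t / 2) (- (1/2)) end.
exists f, 0; split.
- move=> i j h; apply: val_inj; move: h.
  case: i => [[|[|[|[|i]]]] hi] //; case: j => [[|[|[|[|j]]]] hj] //=;
    move=> /pt_inj [] ? ?; first [reflexivity | exfalso; lra].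
- case=> [[|[|[|[|i]]]] hi] //; case=> [[|[|[|[|j]]]] hj] //= _;
    rewrite /f /= pt_sub sq_pt; nra.
- case=> [[|[|[|[|i]]]] hi] //; rewrite /f /= subr0 sq_pt; nra.
Qed.

Lemma dot0l k (v : 'rV[RR]_k) : dot 0 v = 0.
Proof. by rewrite /dot big1 // => i _; rewrite mxE mul0r. Qed.

Lemma dot_suml k (I : finType) (F : I -> 'rV[RR]_k) v :
  dot (\sum_i F i) v = \sum_i dot (F i) v.
Proof. exact: (big_morph (fun u => dot u v) (fun x y => dotDl x y v) (dot0l v)). Qed.

Lemma sq_sub_dot k (a b : 'rV[RR]_k) : sq (a - b) = dot a a + dot b b - 2 * dot a b.
Proof. rewrite sqE !(dotBl, dotBr) (dotC b a); ring. Qed.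

Lemma sum_ind (m : nat) (j : 'I_m) (a : 'I_m -> RR) :
  \sum_(i < m) a i * (i == j)%:R = a j.
Proof.
rewrite (bigD1 j) //= eqxx mulr1 big1 ?addr0 // => i /negbTE ->; by rewrite mulr0.
Qed.

Lemma lin_comb k (P Q : 'rV[RR]_k) l : P + l *: (Q - P) = (1 - l) *: P + l *: Q.
Proof. by rewrite scalerBr scalerBl scale1r addrA addrAC. Qed.

Lemma no_emb m r : (0 < m)%N -> ~ emb (K_plus_eps3_rel m) m.+1 r.
Proof.
move=> m0 [f [c [finj fe fs]]].
pose w x := f x - c.
pose s := r ^+ 2 - 1/2.
have ww x : dot (w x) (w x) = r ^+ 2 by rewrite -sqE; exact: fs.
have wd x y : K_plus_eps3_rel m x y -> dot (w x) (w y) = s.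
  move/fe; have -> : f x - f y = w x - w y by rewrite /w opprB addrA subrK.
  rewrite sq_sub_dot !ww /s => h; lra.
have wii (i j : 'I_m) : dot (w (inl i)) (w (inl j)) = s + (i == j)%:R / 2.
  case: eqP => [->|/eqP ne]; first by rewrite ww /s /=; lra.
  by rewrite wd // mul0r addr0.
have wix (i : 'I_m) (a : 'I_3) : dot (w (inr a)) (w (inl i)) = s by rewrite wd.
have mR : (m%:R : RR) != 0 by rewrite pnatr_eq0 -lt0n.
have hs : 1 + 2 * s * m%:R != 0.
  apply/eqP => hs.
  pose sig := \sum_(i < m) w (inl i).
  have hsig : dot sig sig = 0.
    rewrite /sig dot_suml big1 // => i _; rewrite dotC dot_suml.
    under eq_bigr => j _ do rewrite wii.
    rewrite big_split /= sumr_const card_ord -mulr_suml.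
    have -> : \sum_(j < m) ((j == i)%:R : RR) = 1.
      by have := sum_ind i (fun _ => 1); under eq_bigr do rewrite mul1r.
    rewrite -mulr_natl; lra.
  have sig0 : sig = 0 by apply: sq_eq0; rewrite sqE.
  have : dot sig (w (inr ord0)) = m%:R * s.
    by rewrite /sig dot_suml (eq_bigr (fun _ => s)) ?sumr_const ?card_ord ?mulr_natl // => i _;
       rewrite dotC wd.
  rewrite sig0 dot0l => /esym/eqP; rewrite mulf_eq0 (negbTE mR) /= => /eqP s0.
  by move: hs; rewrite s0 mulr0 mul0r addr0 => /eqP; rewrite oner_eq0.
pose d (j : 'I_2) := w (inr (lift ord0 j)) - w (inr ord0).
pose g (i : 'I_(m + 2)) : 'rV[RR]_m.+1 :=
  match split i with inl i' => w (inl i') | inr j => d j end.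
pose M : 'M[RR]_(m + 2, m.+1) := \matrix_(i, k) g i ord0 k.
have nf : kermx M != 0.
  rewrite kermx_eq0 /row_free; apply/negP => /eqP h.
  by have := rank_leq_col M; rewrite h addn2 ltnn.
have [i0 hi0] : exists i0, row i0 (kermx M) != 0.
  case: (pickP (fun i => row i (kermx M) != 0)) => [i hi|h]; first by exists i.
  have K0 : kermx M = 0.
    apply/row_matrixP => i; rewrite row0; apply/eqP; move/negbT: (h i); by rewrite negbK.
  by rewrite K0 eqxx in nf.
pose u := row i0 (kermx M).
have uM : u *m M = 0 by rewrite /u -row_mul mulmx_ker row0.
have key v : \sum_i u ord0 i * dot (g i) v = 0.
  have h0 : dot (u *m M) v = 0 by rewrite uM dot0l.
  rewrite -[RHS]h0 /dot; symmetry.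
  under eq_bigr => k _ do rewrite !mxE big_distrl /=.
  rewrite exchange_big /=; apply: eq_bigr => i _.
  rewrite mulr_sumr; apply: eq_bigr => k _; by rewrite [M _ _]mxE mulrA.
pose a i := u ord0 (lshift 2 i).
pose b j := u ord0 (rshift m j).
have key2 v : \sum_i a i * dot (w (inl i)) v + \sum_j b j * dot (d j) v = 0.
  have gl i : g (lshift 2 i) = w (inl i) by rewrite /g -[lshift 2 i]/(unsplit (inl i)) unsplitK.
  have gr j : g (rshift m j) = d j by rewrite /g -[rshift m j]/(unsplit (inr j)) unsplitK.
  move: (key v); rewrite big_split_ord /=.
  under eq_bigr do rewrite gl.
  by under [X in _ + X]eq_bigr do rewrite gr.
have hd j0 (i : 'I_m) : dot (d j0) (w (inl i)) = 0 by rewrite /d dotBl !wix subrr.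
pose A := \sum_i a i.
have ha j : s * A + a j / 2 = 0.
  have := key2 (w (inl j)).
  rewrite [X in _ + X]big1 ?addr0; last by move=> i _; rewrite hd mulr0.
  under eq_bigr do rewrite wii mulrDr.
  rewrite big_split /= -mulr_suml mulrC.
  under eq_bigr do rewrite mulrA.
  by rewrite -mulr_suml sum_ind.
have A0 : A = 0.
  have : \sum_(j < m) (s * A + a j / 2) = 0 by rewrite big1.
  rewrite big_split /= sumr_const card_ord -mulr_suml -/A => h.
  have : A * (1 + 2 * s * m%:R) = 0 by rewrite -mulr_natr in h; rewrite -[RHS](mulr0 2) -h; field.
  by move/eqP; rewrite mulf_eq0 (negbTE hs) orbF => /eqP.
have a0 j : a j = 0 by have := ha j; rewrite A0 mulr0 add0r => /eqP; rewrite mulf_eq0 invr_eq0 pnatr_eq0 orbF => /eqP.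
pose z := \sum_j b j *: d j.
have z0 : z = 0.
  have hz v : dot z v = 0.
    have := key2 v; rewrite big1 ?add0r; last by move=> i _; rewrite a0 mul0r.
    by move=> <-; rewrite /z dot_suml; apply: eq_bigr => i _; rewrite dotZl.
  by apply: sq_eq0; rewrite sqE hz.
have [j hj] : exists j, b j != 0.
  have [k hk] : exists k, u ord0 k != 0.
    case: (pickP (fun k => u ord0 k != 0)) => [k hk|h]; first by exists k.
    have u0 : u = 0 by apply/rowP => k; rewrite [RHS]mxE; apply/eqP; move/negbT: (h k); rewrite negbK.
    by move: hi0; rewrite -/u u0 eqxx.
  case: (splitP k) => [i' hk'|j' hk'].
    have : k = lshift 2 i' by apply: val_inj.
    by move=> kk; move: hk; rewrite kk -/(a i') a0 eqxx.
  exists j'; have : k = rshift m j' by apply: val_inj.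
  by move=> kk; move: hk; rewrite kk.
have winj : injective w by move=> x y /addIr /finj.
set j1 : 'I_2 := lift ord0 ord0.
have zE : z = b ord0 *: d ord0 + b j1 *: d j1.
  by rewrite /z !big_ord_recl big_ord0 addr0.
set p0 := w (inr ord0).
set p1 := w (inr (lift ord0 (ord0 : 'I_2))).
set p2 := w (inr (lift ord0 j1)).
have inr_val (a' b' : 'I_3) : w (inr a') = w (inr b') -> val a' = val b'.
  by move=> /winj h; have := congr1 (fun x => if x is inr a then val a else 0%N) h.
have n01 : p0 != p1 by apply/eqP => /inr_val.
have n02 : p0 != p2 by apply/eqP => /inr_val.
have n12 : p1 != p2 by apply/eqP => /inr_val.
have sp x : sq (w x) = r ^+ 2 by rewrite sqE ww.
case: (eqVneq (b j1) 0) => hb1.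
  have hb0 : b ord0 != 0.
    have : j = ord0 \/ j = j1.
      by case: j hj => [[|[|k]] hk] _; [left|right|by []]; apply: val_inj.
    by case=> jj; move: hj; rewrite jj // hb1 eqxx.
  move: z0; rewrite zE hb1 scale0r addr0 => /eqP; rewrite scaler_eq0 (negbTE hb0) /= /d subr_eq0.
  by rewrite eq_sym (negbTE n01).
pose l := - b ord0 / b j1.
have d1 : d j1 = l *: d ord0.
  move: z0; rewrite zE => /eqP; rewrite addrC addr_eq0 => /eqP h.
  have := congr1 (fun v => (b j1)^-1 *: v) h; rewrite /= scalerA mulVf // scale1r => ->.
  by rewrite scalerN scalerA -scaleNr /l; congr (_ *: _); rewrite mulrC mulNr.
have p2E : p2 = (1 - l) *: p0 + l *: p1.
  have : p2 = p0 + d j1 by rewrite /d addrC subrK.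
  by rewrite d1 /d -/p0 -/p1 => ->; rewrite lin_comb.
have := @sphere_line _ p0 p1 (r ^+ 2) l (sp _) (sp _).
rewrite -p2E => /(_ (sp _)) [l0|[l1|e01]].
- by move: n02; rewrite p2E l0 subr0 scale1r scale0r addr0 eqxx.
- by move: n12; rewrite p2E l1 subrr scale0r add0r scale1r eqxx.
- by move: n01; rewrite e01 eqxx.
Qed.

Local Close Scope ring_scope.

Lemma inj_of_card (A B : finType) : (#|A| <= #|B|)%N -> exists g : A -> B, injective g.
Proof.
move=> H; exists (fun x => enum_val (widen_ord H (enum_rank x))).
move=> x y /enum_val_inj /(congr1 val) /= h; apply: enum_rank_inj; exact: val_inj.
Qed.

Lemma ext_bij (T : finType) m j (s : seq T) (x0 : T) :
  uniq s -> size s = j -> #|T| = (m + j)%N ->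
  exists iota : ('I_m + 'I_j)%type -> T,
    [/\ bijective iota, forall i : 'I_j, iota (inr i) = nth x0 s i &
        forall i : 'I_m, iota (inl i) \notin s].
Proof.
move=> us ss cT.
set S := [set x | x \notin s].
have cS : #|S| = m.
  have := cardC (mem s); rewrite (card_uniqP us) ss cT => h.
  have h' : #|[predC s]| = m by apply/eqP; rewrite -(eqn_add2l j) h addnC.
  rewrite cardsE -h'; apply: eq_card => x; by rewrite !inE.
pose iota (x : ('I_m + 'I_j)%type) : T :=
  match x with inl i => enum_val (cast_ord (esym cS) i) | inr i => nth x0 s i end.
have hl i : iota (inl i) \notin s.
  by have := enum_valP (cast_ord (esym cS) i); rewrite inE.
have hr (i : 'I_j) : iota (inr i) \in s by rewrite /= mem_nth // ss.
have inj : injective iota.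
  move=> [i|i] [i'|i'] /= h.
  - by move/enum_val_inj/cast_ord_inj: h => ->.
  - by move: (hl i); rewrite /= h mem_nth // ss.
  - by move: (hl i'); rewrite /= -h mem_nth // ss.
  - by apply/eqP; move: h => /eqP; rewrite nth_uniq ?ss // => /eqP ->.
exists iota; split => //.
apply: inj_card_bij inj _.
by rewrite card_sum !card_ord cT.
Qed.

Lemma emb_bij (T T2 : finType) (e : rel T) (E : rel T2) k r (iota : T2 -> T) :
  emb E k r -> bijective iota -> (forall x y, e (iota x) (iota y) -> E x y) -> emb e k r.
Proof.
move=> he [g h1 h2] hE; apply: (emb_sub (g := g) he).
  exact: can_inj h2.
by move=> x y; rewrite -{1}(h2 x) -{1}(h2 y) => /hE.
Qed.

Definition twoD (T : finType) (e : rel T) :=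
  exists a b c d, uniq [:: a; b; c; d] /\ ~~ e a b /\ ~~ e c d.
Definition star3 (T : finType) (e : rel T) :=
  exists a b c d, uniq [:: a; b; c; d] /\ [/\ ~~ e a b, ~~ e a c & ~~ e a d].

Lemma r_lt1 (r : RR) : (0 <= r)%R -> (r ^+ 2 <= 1/2)%R -> (r < 1)%R.
Proof. move=> h1 h2; nra. Qed.

Lemma sph_small (T1 : finType) (e1 : rel T1) N :
  irreflexive e1 -> (#|T1| <= N.+1)%N -> sph_embeddable e1 N.
Proof.
move=> irr hc.
have r00 : ((0 : RR) ^+ 2 <= 1/2)%R by rewrite expr0n /=; lra.
have [r [r0 r2 hj]] := emb_join emb_K1 (@Order.POrderTheory.lexx _ _ (0%R:RR)) r00 N.
rewrite addn0 in hj.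
have hcard : (#|T1| <= #|{: 'I_N + 'I_1}|)%N by rewrite card_sum !card_ord addn1.
have [g ginj] := inj_of_card hcard.
apply: (emb_sph _ (r_lt1 r0 r2) r0).
apply: (emb_sub hj ginj) => x y hxy.
have : g x != g y.
  by apply: contraTneq hxy => /ginj ->; rewrite irr.
move: (g x) (g y) => [i|i] [j|j] //=.
by rewrite (ord1 i) (ord1 j) eqxx.
Qed.

Lemma sph_twoD (T1 : finType) (e1 : rel T1) N :
  simple_graph e1 -> #|T1| = N -> (4 <= N)%N -> twoD e1 -> sph_embeddable e1 (N - 2).
Proof.
move=> [sym irr] cT h4 [a [b [c [d [u [hab hcd]]]]]].
have [r [r0 r2 hc]] := emb_c4.
have [r' [r0' r2' hj]] := emb_join hc r0 r2 (N - 4).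
have -> : (N - 2 = N - 4 + 2)%N by lia.
have cT' : #|T1| = (N - 4 + 4)%N by rewrite cT; lia.
have [iota [bij hnth hl]] := @ext_bij T1 (N - 4) 4 [:: a; b; c; d] a u erefl cT'.
apply: (emb_sph _ (r_lt1 r0' r2') r0').
apply: (emb_bij hj bij) => -[i|i] [j|j] //=.
- by apply: contraTneq => ->; rewrite irr.
- rewrite !hnth.
  case: i => [[|[|[|[|i]]]] hi] //; case: j => [[|[|[|[|j]]]] hj'] //=;
  first [ by rewrite irr | by rewrite (negbTE hab) | by rewrite sym (negbTE hab)
        | by rewrite (negbTE hcd) | by rewrite sym (negbTE hcd) | done ].
Qed.

Lemma sph_star3 (T1 : finType) (e1 : rel T1) N :
  simple_graph e1 -> #|T1| = N -> (4 <= N)%N -> star3 e1 -> sph_embeddable e1 (N - 2).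
Proof.
move=> [sym irr] cT h4 [a [b [c [d [u [hab hac had]]]]]].
have [r [r0 r2 hc]] := emb_tri.
have [r' [r0' r2' hj]] := emb_join hc r0 r2 (N - 4).
have -> : (N - 2 = N - 4 + 2)%N by lia.
have cT' : #|T1| = (N - 4 + 4)%N by rewrite cT; lia.
have [iota [bij hnth hl]] := @ext_bij T1 (N - 4) 4 [:: a; b; c; d] a u erefl cT'.
apply: (emb_sph _ (r_lt1 r0' r2') r0').
apply: (emb_bij hj bij) => -[i|i] [j|j] //=.
- by apply: contraTneq => ->; rewrite irr.
- rewrite !hnth.
  case: i => [[|[|[|[|i]]]] hi] //; case: j => [[|[|[|[|j]]]] hj'] //=;
  first [ by rewrite irr | by rewrite (negbTE hab) | by rewrite sym (negbTE hab)
        | by rewrite (negbTE hac) | by rewrite sym (negbTE hac)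
        | by rewrite (negbTE had) | by rewrite sym (negbTE had) | done ].
Qed.

Lemma no_sph n k : (3 < n)%N -> (k < n.-1)%N -> ~ sph_embeddable (K_plus_eps3_rel (n - 3)) k.
Proof.
move=> h3 hk /sph_emb [r he].
have h0 : (0 < n - 3)%N by lia.
apply: (no_emb (r := r) h0).
by apply: emb_upn he; lia.
Qed.

Ltac dist := rewrite /= ?inE ?negb_or ?andbT; repeat (apply/andP; split); try done; try (rewrite eq_sym; done).

Lemma tri_core (T : finType) (e : rel T) a b c x y : symmetric e ->
  uniq [:: a; b; c] -> ~~ e a b -> ~~ e a c -> ~ twoD e -> ~ star3 e ->
  x != y -> ~~ e x y -> x \in [:: a; b; c].
Proof.
move=> sym u hab hac n2 n3 xy hxy; apply/negPn/negP => hx.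
move: u hx; rewrite /= !inE !negb_or !andbT => /andP [/andP [ab ac] bc] /and3P [xa xb xc].
case: (eqVneq y a) => [ya|ya].
  apply: n3; exists a, b, c, x; split; first by dist.
  by split => //; rewrite sym -ya.
case: (eqVneq y b) => [yb|yb].
  apply: n2; exists a, c, x, b; split; first by dist.
  by split => //; rewrite -yb.
apply: n2; exists a, b, x, y; split; first by dist.
by split.
Qed.

Lemma third (T : finType) (a b : T) : (3 <= #|T|)%N -> exists c, c \notin [:: a; b].
Proof.
move=> h; apply: NNPP => hn.
have : (#|T| <= #|[:: a; b]|)%N.
  apply: subset_leq_card; apply/subsetP => x _; apply/negPn/negP => hx.
  by apply: hn; exists x.
move=> h1; have h2 := card_size [:: a; b].
by have := leq_trans (leq_trans h h1) h2.
Qed.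

Lemma trich (T : finType) (e : rel T) : simple_graph e -> (3 <= #|T|)%N ->
  ~ twoD e -> ~ star3 e ->
  exists p q s, uniq [:: p; q; s] /\ forall x y, x != y -> ~~ e x y -> x \in [:: p; q; s].
Proof.
move=> [sym irr] h3 n2 n3.
case: (classic (exists a b, a != b /\ ~~ e a b)) => [[a [b [ab hab]]]|none].
  case: (classic (exists c, c \notin [:: a; b] /\ (~~ e a c \/ ~~ e b c))) =>
     [[c [hc [hac|hbc]]]|none].
  - exists a, b, c; split.
      by move: hc; rewrite /= !inE negb_or => /andP [ca cb]; dist.
    move=> x y; apply: tri_core => //.
    by move: hc; rewrite /= !inE negb_or => /andP [ca cb]; dist.
  - exists b, a, c; split.
      by move: hc; rewrite /= !inE negb_or => /andP [ca cb]; dist.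
    move=> x y; apply: tri_core => //.
      by move: hc; rewrite /= !inE negb_or => /andP [ca cb]; dist.
    by rewrite sym.
  - have [c hc] := third a b h3.
    exists a, b, c; split.
      by move: hc; rewrite /= !inE negb_or => /andP [ca cb]; dist.
    move=> x y xy hxy.
    have : x \in [:: a; b]; last by rewrite /= !inE => /orP [->|->]; rewrite ?orbT.
    apply/negPn/negP => hx.
    case: (eqVneq y a) => [ya|ya].
      by apply: none; exists x; split => //; left; rewrite sym -ya.
    case: (eqVneq y b) => [yb|yb].
      by apply: none; exists x; split => //; right; rewrite sym -yb.
    apply: n2; exists a, b, x, y; split => //.
    by move: hx; rewrite /= !inE negb_or => /andP [xa xb]; dist.
have [p [q [s [hp hq]]]] : exists p q s : T, uniq [:: p; q; s] /\ True.
  have := enum_uniq T; have : (3 <= size (enum T))%N by rewrite -cardE.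
  case: (enum T) => [|p [|q [|s l]]] //= _.
  rewrite !inE !negb_or => /and4P [/and3P [pq ps _] /andP [qs _] _ _].
  exists p, q, s; split => //; dist.
exists p, q, s; split => // x y xy hxy.
by case: none; exists x, y.
Qed.

Lemma minor_cases (T' T : finType) (e' : rel T') (e : rel T) : is_minor e' e ->
  (#|T'| < #|T|)%N \/ exists g : T' -> T, bijective g /\ forall x y, e' x y -> e (g x) (g y).
Proof.
move=> [phi [hne hdis _ hed]].
pose rep x := xchoose (elimT (set0Pn (phi x)) (hne x)).
have repP x : rep x \in phi x := xchooseP (elimT (set0Pn (phi x)) (hne x)).
have same x y a : a \in phi x -> a \in phi y -> x = y.
  move=> ha hb; apply/eqP; apply: contraTT isT => /hdis/disjointFr/(_ ha).
  by rewrite hb.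
have rinj : injective rep.
  by move=> x y h; apply: (same x y (rep x)) => //; rewrite h.
have := leq_card rep rinj; rewrite leq_eqVlt => /orP [/eqP hc|]; last by left.
right; exists rep.
have bij : bijective rep by apply: inj_card_bij rinj _; rewrite hc.
split => // x y /hed [a [b [ha hb hab]]].
have [g gK Kg] := bij.
have ea : a = rep x.
  rewrite -(Kg a); congr rep; apply: (same (g a) x a _ ha); rewrite -{1}(Kg a); exact: repP.
have eb : b = rep y.
  rewrite -(Kg b); congr rep; apply: (same (g b) y b _ hb); rewrite -{1}(Kg b); exact: repP.
by rewrite -ea -eb.
Qed.

Definition Eset (T : finType) (e : rel T) := [set u : T * T | e u.1 u.2].

Lemma iso_card (T1 T2 : finType) (e1 : rel T1) (e2 : rel T2) (f : T1 -> T2) :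
  bijective f -> (forall x y, e1 x y = e2 (f x) (f y)) -> #|Eset e1| = #|Eset e2|.
Proof.
move=> bij hf; have [g fK gK] := bij.
have -> : Eset e2 = [set (f u.1, f u.2) | u in Eset e1].
  apply/setP => -[x y]; rewrite inE /=; apply/idP/imsetP.
    by move=> h; exists (g x, g y); rewrite ?inE /= ?hf ?gK.
  by move=> [[x' y'] /=]; rewrite inE /= hf => h [-> ->].
rewrite card_imset // => -[a b] [c d] /= [] /(bij_inj bij) -> /(bij_inj bij) ->.
done.
Qed.

Lemma K_simple m : simple_graph (K_plus_eps3_rel m).
Proof.
split.
  by move=> [i|i] [j|j] //=; rewrite eq_sym.
by move=> [i|i] //=; rewrite eqxx.
Qed.

Theorem mainTheorem18 (n : nat) : (3 < n)%N ->
  forall (T : finType) (e : rel T), simple_graph e -> #|T| = n ->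
    (in_S n e <-> graph_iso e (K_plus_eps3_rel (n - 3))).
Proof.
move=> h3 T e se cT.
have [sym irr] := se.
have [Ksym Kirr] := K_simple (n - 3).
split.
- move=> [_ [[_ hlow] hmin]].
  have h4 : (4 <= n)%N by lia.
  have hn2 : (n - 2 < n.-1)%N by lia.
  have n2 : ~ twoD e by move=> h; exact: (hlow _ hn2 (sph_twoD se cT h4 h)).
  have n3 : ~ star3 e by move=> h; exact: (hlow _ hn2 (sph_star3 se cT h4 h)).
  have [p [q [s [us hs]]]] := trich se (ltac:(lia)) n2 n3.
  have cT' : #|T| = (n - 3 + 3)%N by lia.
  have [iota [bij hnth hl]] := @ext_bij T (n - 3) 3 [:: p; q; s] p us erefl cT'.
  have claim x y : K_plus_eps3_rel (n - 3) x y -> e (iota x) (iota y).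
    move=> hK; apply/negPn/negP => hne.
    have xy : iota x != iota y by apply: contraTneq hK => /(bij_inj bij) ->; rewrite Kirr.
    have hx := hs _ _ xy hne.
    have hy : iota y \in [:: p; q; s].
      by apply: (hs _ (iota x)); rewrite 1?eq_sym // sym.
    clear hne xy; case: x hK hx => [i|i] hK hx; first by rewrite (negbTE (hl i)) in hx.
    by case: y hK hy => [j|j] //= hK hy; rewrite (negbTE (hl j)) in hy.
  case: (classic (exists i j : 'I_3, e (iota (inr i)) (iota (inr j)))) => [[i [j hij]]|none].
  + exfalso.
    have pm : is_proper_minor (K_plus_eps3_rel (n - 3)) e.
      split.
        exists (fun x => [set iota x]); split.
        - by move=> x; apply/set0Pn; exists (iota x); rewrite inE.
        - by move=> x y xy; rewrite disjoints1 inE (inj_eq (bij_inj bij)).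
        - by move=> x a b; rewrite !inE => /eqP -> /eqP ->; exact: connect0.
        - by move=> x y /claim h; exists (iota x), (iota y); rewrite !inE !eqxx.
      move=> [f [fbij hf]].
      have c1 := iso_card fbij hf.
      have : (#|[set (iota u.1, iota u.2) | u in Eset (K_plus_eps3_rel (n - 3))]| < #|Eset e|)%N.
        apply: proper_card; apply/properP; split.
          by apply/subsetP => z /imsetP [[x y] /=]; rewrite inE /= => /claim h ->; rewrite inE.
        exists (iota (inr i), iota (inr j)); first by rewrite inE.
        apply/imsetP => -[[x y] /=]; rewrite inE /= => hK [/(bij_inj bij) ex /(bij_inj bij) ey].
        by move: hK; rewrite -ex -ey.
      rewrite card_imset ?c1 ?ltnn //.
      by move=> -[a b] [c d] /= [] /(bij_inj bij) -> /(bij_inj bij) ->.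
    have [k [hk hsph]] := hmin _ _ (K_simple _) pm.
    exact: no_sph h3 hk hsph.
  + have [g gK Kg] := bij.
    exists g; split; first by exists iota.
    move=> x y; rewrite -{1}(Kg x) -{1}(Kg y).
    move: (g x) (g y) => a b; apply/idP/idP; last exact: claim.
    case: a => [i|i]; case: b => [j|j] //=.
    * by apply: contraTneq => ->; rewrite irr.
    * by move=> hh; case: none; exists i, j.
- move=> [f [fbij hf]].
  have [g fK gK] := fbij.
  have noe k : (k < n.-1)%N -> ~ sph_embeddable e k.
    move=> hk /sph_emb [r he].
    have h0 : (0 < n - 3)%N by lia.
    apply: (no_emb (r := r) h0).
    apply: (@emb_upn _ _ k); first by lia.
    apply: (emb_sub (g := g) he); first exact: can_inj gK.
    by move=> x y hK; rewrite hf !gK.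
  split => //; split.
    split => //; apply: sph_small irr _; lia.
  move=> T' e' se' [hm hni].
  case: (minor_cases hm) => [hlt|[h [hbij he']]].
    exists (n - 2); split; first by lia.
    by apply: sph_small; [case: se' | lia].
  have cT' : #|T'| = n by rewrite -cT; exact: bij_eq_card hbij.
  have hn2 : (n - 2 < n.-1)%N by lia.
  have h4 : (4 <= n)%N by lia.
  case: (classic (twoD e')) => [h2|n2].
    by exists (n - 2); split => //; exact: sph_twoD se' cT' h4 h2.
  case: (classic (star3 e')) => [h2|n3].
    by exists (n - 2); split => //; exact: sph_star3 se' cT' h4 h2.
  exfalso.
  have [sym' irr'] := se'.
  have [x0 [y0 [hxy0 hn0]]] : exists x0 y0, e (h x0) (h y0) /\ ~~ e' x0 y0.
    apply: NNPP => hn; apply: hni; exists h; split => // x y; apply/idP/idP.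
      exact: he'.
    by move=> hh; apply/negPn/negP => hne; apply: hn; exists x, y.
  have Hbij : bijective (f \o h) := bij_comp fbij hbij.
  have [Hi HK KH] := Hbij.
  have He x y : e' x y -> K_plus_eps3_rel (n - 3) (f (h x)) (f (h y)) by move/he'; rewrite hf.
  pose t (a : 'I_3) := Hi (inr a).
  have Ht a : f (h (t a)) = inr a by exact: (KH (inr a)).
  have ht a b : ~~ e' (t a) (t b).
    by apply/negP => /He; rewrite !Ht.
  set i0 : 'I_3 := @Ordinal 3 0 isT.
  set i1 : 'I_3 := @Ordinal 3 1 isT.
  set i2 : 'I_3 := @Ordinal 3 2 isT.
  have tinj : injective t by move=> a b /(congr1 (f \o h)) /=; rewrite !Ht => -[].
  have ut : uniq [:: t i0; t i1; t i2].
    by rewrite /= !inE !(inj_eq tinj).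
  have xy0 : x0 != y0 by apply: contraTneq hxy0 => ->; rewrite irr.
  have hx0 := tri_core sym' ut (ht _ _) (ht _ _) n2 n3 xy0 hn0.
  have hy0 : y0 \in [:: t i0; t i1; t i2].
    by apply: (tri_core sym' ut (ht _ _) (ht _ _) n2 n3 (x := y0) (y := x0));
      rewrite 1?eq_sym // sym'.
  have ex : exists a, x0 = t a.
    by move: hx0; rewrite !inE => /or3P [] /eqP ->; eexists.
  have ey : exists a, y0 = t a.
    by move: hy0; rewrite !inE => /or3P [] /eqP ->; eexists.
  have [a ea] := ex; have [b eb] := ey.
  by move: hxy0; rewrite hf ea eb !Ht.
Qed.
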